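(* Let $H_0$ be a Hermitian operator on a finite-dimensional Hilbert space with ground-space projection $P_0$, $Q_0=I-P_0$, ground energy $E_0$, $G=Q_0(E_0I-H_0)^{-1}Q_0$, and $V$ Hermitian. Suppose $L$ is an integer with $P_0\Gamma(n)P_0\subseteq\mathbb{C}P_0$ for all $n<L$. Then $P_0\hat S^{2j-1}(V_{\mathrm{od}})_{n-1}P_0\in\mathbb{C}P_0$ for all $j\ge1$ and all $n<L$, and $P_0\hat S^{2j-1}(V_{\mathrm{od}})_{L-1}P_0\in\mathbb{C}P_0$ for all $j>1$.
   Context: $\Gamma(n)$ is the linear span of operators $Z_0VZ_1V\cdots Z_{n-1}VZ_n$ ($n$ factors of $V$) with each $Z_j\in\{P_0,Q_0\}\cup\{G^m:m\in\mathbb{N}\}$. Set $V_{\mathrm d}=P_0VP_0+Q_0VQ_0$, $V_{\mathrm{od}}=P_0VQ_0+Q_0VP_0$, $\mathcal{L}(X)=P_0XG-GXP_0$, $\mathrm{ad}_S(X)=[S,X]$, $a_m=2^m\beta_m/m!$ with $\beta_m$ the Bernoulli numbers. Define $S_1=\mathcal{L}(V_{\mathrm{od}})$, $S_2=-\mathcal{L}(\mathrm{ad}_{V_{\mathrm d}}(S_1))$, and for $n\ge3$, $S_n=-\mathcal{L}(\mathrm{ad}_{V_{\mathrm d}}(S_{n-1}))+\sum_{j\ge1}a_{2j}\mathcal{L}(\hat S^{2j}(V_{\mathrm{od}})_{n-1})$, where $\hat S^k(V_{\mathrm{od}})_m=\sum_{n_1,\dots,n_k\ge1,\ \sum_r n_r=m}\mathrm{ad}_{S_{n_1}}\cdots\mathrm{ad}_{S_{n_k}}(V_{\mathrm{od}})$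 (an empty sum being $0$). *)

(* Defs.v *)
From HB Require Import structures.
From mathcomp Require Import all_boot all_order all_algebra.
Set Implicit Arguments. Unset Strict Implicit. Unset Printing Implicit Defensive.
Import Order.TTheory GRing.Theory Num.Theory.
Local Open Scope ring_scope.

(* Operators on a d-dimensional Hilbert space C^d are d x d matrices over a
   numeric algebraically closed field C (e.g. algC); conjugation is Num.conj. *)

Section Defs.
Variables (C : numClosedFieldType) (d : nat).
Local Notation M := 'M[C]_d.

Definition adjmx (A : M) : M := map_mx Num.conj A^T.
Definition is_hermitian (A : M) : Prop := adjmx A = A.

Definition ground_energy (H0 : M) (E0 : C) : Prop :=
  eigenvalue H0 E0 /\ (forall a, eigenvalue H0 a -> E0 <= a).

Definition ground_proj (H0 : M) (E0 : C) (P0 : M) : Prop :=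
  [/\ P0 *m P0 = P0, is_hermitian P0 & (P0 == eigenspace H0 E0)%MS].

Definition Qc (P0 : M) : M := 1%:M - P0.

(* G = Q0 (E0 I - H0)^{-1} Q0, the inverse being taken on the range of Q0;
   concretely (E0 I - H0 + P0) is invertible and agrees with E0 I - H0 there. *)
Definition resolvent (H0 : M) (E0 : C) (P0 : M) : M :=
  Qc P0 *m invmx (E0%:M - H0 + P0) *m Qc P0.

(* the factors Z_j of the words generating Gamma(n) *)
Inductive zfac := ZP | ZQ | ZG of nat.

Variables (P0 G V : M).

Definition zval (z : zfac) : M :=
  match z with ZP => P0 | ZQ => Qc P0 | ZG m => G ^+ m end.

Fixpoint word (z0 : zfac) (zs : seq zfac) : M :=
  match zs with
  | [::] => zval z0
  | z1 :: zs' => zval z0 *m V *m word z1 zs'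
  end.

Definition in_Gamma (n : nat) (X : M) : Prop :=
  exists (k : nat) (c : 'I_k -> C) (z0 : 'I_k -> zfac) (zs : 'I_k -> seq zfac),
    (forall i, size (zs i) = n) /\ X = \sum_(i < k) c i *: word (z0 i) (zs i).

Definition Vd : M := P0 *m V *m P0 + Qc P0 *m V *m Qc P0.
Definition Vod : M := P0 *m V *m Qc P0 + Qc P0 *m V *m P0.
Definition Lop (X : M) : M := P0 *m X *m G - G *m X *m P0.
Definition ad (S X : M) : M := S *m X - X *m S.

Fixpoint bern_seq (m : nat) : seq C :=
  match m with
  | 0 => [:: 1]
  | m'.+1 => let s := bern_seq m' in
      rcons s (- (m'.+2%:R)^-1 * \sum_(k < m'.+1) 'C(m'.+2, k)%:R * s`_k)
  end.
Definition bernoulli (m : nat) : C := (bern_seq m)`_m.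
Definition acoef (m : nat) : C := 2%:R ^+ m * bernoulli m / (m`!)%:R.

(* Shat^k(Vod)_m given the sequence S, summing over (n_1,..,n_k), n_r >= 1,
   sum n_r = m, of ad_{S n_1} ... ad_{S n_k} (Vod).  (Each n_r <= m.) *)
Definition Shat_of (S : nat -> M) (k m : nat) : M :=
  \sum_(t : k.-tuple 'I_m.+1 |
          all (fun i : 'I_m.+1 => 0 < (i : nat))%N t &&
          (\sum_(i <- t) (i : nat) == m)%N)
     foldr (fun (i : 'I_m.+1) X => ad (S i) X) Vod t.

Definition Snext (S : nat -> M) (n : nat) : M :=
  if n == 1%N then Lop Vod
  else if n == 2%N then - Lop (ad Vd (S 1%N))
  else - Lop (ad Vd (S n.-1))
       + \sum_(1 <= j < n) acoef (2 * j) *: Lop (Shat_of S (2 * j) n.-1).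
(* the sum over j >= 1 is finite: Shat^{2j}(Vod)_{n-1} = 0 once 2j > n-1 *)

(* [:: S_0; S_1; ..; S_N] with the dummy S_0 = 0 *)
Fixpoint Sseq (N : nat) : seq M :=
  match N with
  | 0 => [:: 0]
  | N'.+1 => let s := Sseq N' in rcons s (Snext (fun i => s`_i) N'.+1)
  end.

Definition Sgen (n : nat) : M := (Sseq n)`_n.
Definition Shat (k m : nat) : M := Shat_of Sgen k m.

End Defs.

(* Main.v *)
Require Import Defs.
From mathcomp Require Import all_boot all_order all_algebra.
From mathcomp Require Import zify.
Import Order.TTheory GRing.Theory Num.Theory.
Set Implicit Arguments. Unset Strict Implicit. Unset Printing Implicit Defensive.
Local Open Scope ring_scope.

Section Aux.
Variables (C : numClosedFieldType) (d : nat) (P0 Q0 G V : 'M[C]_d).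
Hypothesis hQ : Qc P0 = Q0.
Hypothesis hPP : P0 *m P0 = P0.
Hypothesis hPG : P0 *m G = 0.
Hypothesis hGP : G *m P0 = 0.
Hypothesis hQG : Q0 *m G = G.
Hypothesis hGQ : G *m Q0 = G.

Local Notation Gm := (in_Gamma P0 G V).

Lemma hPQ : P0 *m Q0 = 0.
Proof. by rewrite -hQ /Qc mulmxBr mulmx1 hPP subrr. Qed.
Lemma hQP : Q0 *m P0 = 0.
Proof. by rewrite -hQ /Qc mulmxBl mul1mx hPP subrr. Qed.
Lemma hQQ : Q0 *m Q0 = Q0.
Proof. by rewrite -{1}hQ /Qc mulmxBl mul1mx hPQ subr0. Qed.

Lemma zmul z1 z2 : zval P0 G z1 *m zval P0 G z2 = 0 \/
  exists z3, zval P0 G z1 *m zval P0 G z2 = zval P0 G z3.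
Proof.
have eS n : G ^+ n.+1 = G *m G ^+ n by rewrite exprS mulmxE.
have eSr n : G ^+ n.+1 = G ^+ n *m G by rewrite exprSr mulmxE.
case: z1 => [||[|m]]; case: z2 => [||[|n]] /=; rewrite ?hQ ?expr0 -?idmxE ?mulmx1 ?mul1mx.
- by right; exists ZP.
- by left; rewrite hPQ.
- by right; exists ZP.
- by left; rewrite eS mulmxA hPG mul0mx.
- by left; rewrite hQP.
- by right; exists ZQ; rewrite hQQ.
- by right; exists ZQ.
- by right; exists (ZG n.+1); rewrite /= eS mulmxA hQG.
- by right; exists ZP.
- by right; exists ZQ.
- by right; exists (ZG 0); rewrite /= expr0 idmxE.
- by right; exists (ZG n.+1).
- by left; rewrite eSr -mulmxA hGP mulmx0.
- by right; exists (ZG m.+1); rewrite /= eSr -mulmxA hGQ.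
- by right; exists (ZG m.+1).
- by right; exists (ZG (m.+1 + n.+1)); rewrite /= exprD mulmxE.
Qed.


Lemma zword z z0 zs : zval P0 G z *m word P0 G V z0 zs = 0 \/
  exists z3, zval P0 G z *m word P0 G V z0 zs = word P0 G V z3 zs.
Proof.
case: zs => [|z1 zs] /=; first exact: zmul.
by case: (zmul z z0) => [h|[z3 h]]; [left | right; exists z3];
  rewrite !mulmxA h ?mul0mx.
Qed.

Lemma wordmul z0 zs z0' zs' :
  word P0 G V z0 zs *m word P0 G V z0' zs' = 0 \/
  exists z3 zs3, size zs3 = (size zs + size zs')%N /\
    word P0 G V z0 zs *m word P0 G V z0' zs' = word P0 G V z3 zs3.
Proof.
elim: zs z0 => [|z1 zs IH] z0 /=.
  by case: (zword z0 z0' zs') => [h|[z3 h]]; [left|right; exists z3, zs'].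
case: (IH z1) => [h|[z3 [zs3 [hs h]]]]; [left | right; exists z0, (z3 :: zs3)].
  by rewrite -mulmxA h mulmx0.
by rewrite /= hs -mulmxA h.
Qed.

Lemma Gm0 n : Gm n 0.
Proof.
exists 0%N, (fun _ => 0), (fun _ => ZP), (fun _ => [::]); split.
  by case=> m; rewrite ltn0.
by rewrite big_ord0.
Qed.

Lemma GmD n X Y : Gm n X -> Gm n Y -> Gm n (X + Y).
Proof.
move=> [k1 [c1 [a1 [s1 [h1 ->]]]]] [k2 [c2 [a2 [s2 [h2 ->]]]]].
exists (k1 + k2)%N,
  (fun i => match split i with inl a => c1 a | inr b => c2 b end),
  (fun i => match split i with inl a => a1 a | inr b => a2 b end),
  (fun i => match split i with inl a => s1 a | inr b => s2 b end); split.
  by move=> i; case: (split i).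
rewrite big_split_ord /=; congr (_ + _); apply: eq_bigr => i _.
  by rewrite -[lshift _ _]/(unsplit (inl _)) unsplitK.
by rewrite -[rshift _ _]/(unsplit (inr _)) unsplitK.
Qed.

Lemma GmZ n c X : Gm n X -> Gm n (c *: X).
Proof.
move=> [k1 [c1 [a1 [s1 [h1 ->]]]]].
exists k1, (fun i => c * c1 i), a1, s1; split => //.
by rewrite scaler_sumr; apply: eq_bigr => i _; rewrite scalerA.
Qed.

Lemma GmN n X : Gm n X -> Gm n (- X).
Proof. by move=> h; rewrite -scaleN1r; apply: GmZ. Qed.

Lemma GmB n X Y : Gm n X -> Gm n Y -> Gm n (X - Y).
Proof. by move=> hX hY; apply: GmD => //; apply: GmN. Qed.

Lemma Gmsum n (I : Type) (r : seq I) (P : pred I) F :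
  (forall i, P i -> Gm n (F i)) -> Gm n (\sum_(i <- r | P i) F i).
Proof. move=> h; apply: big_ind => //; [exact: Gm0 | exact: GmD]. Qed.

Lemma Gmword z0 zs : Gm (size zs) (word P0 G V z0 zs).
Proof.
exists 1%N, (fun _ => 1), (fun _ => z0), (fun _ => zs); split => //.
by rewrite big_ord1 scale1r.
Qed.

Lemma GmM m n X Y : Gm m X -> Gm n Y -> Gm (m + n) (X *m Y).
Proof.
move=> [k1 [c1 [a1 [s1 [h1 ->]]]]] [k2 [c2 [a2 [s2 [h2 ->]]]]].
rewrite mulmx_suml; apply: Gmsum => i _.
rewrite mulmx_sumr; apply: Gmsum => j _.
rewrite -scalemxAl -scalemxAr; apply: GmZ; apply: GmZ.
case: (wordmul (a1 i) (s1 i) (a2 j) (s2 j)) => [->|[z3 [zs3 [hs ->]]]].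
  exact: Gm0.
have -> : (m + n = size zs3)%N by rewrite hs h1 h2.
exact: Gmword.
Qed.

Lemma GmP : Gm 0 P0. Proof. exact: (Gmword ZP [::]). Qed.
Lemma GmG : Gm 0 G.
Proof. by have := Gmword (ZG 1) [::]; rewrite /= expr1. Qed.
Lemma GmVod : Gm 1 (Vod P0 V).
Proof. by apply: GmD; [exact: (Gmword ZP [:: ZQ]) | exact: (Gmword ZQ [:: ZP])]. Qed.
Lemma GmVd : Gm 1 (Vd P0 V).
Proof. by apply: GmD; [exact: (Gmword ZP [:: ZP]) | exact: (Gmword ZQ [:: ZQ])]. Qed.

Lemma GmLop n X : Gm n X -> Gm n (Lop P0 G X).
Proof.
move=> h; apply: GmB.
  by have := GmM (GmM GmP h) GmG; rewrite add0n addn0.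
by have := GmM (GmM GmG h) GmP; rewrite add0n addn0.
Qed.

Lemma Gmad m n S X : Gm m S -> Gm n X -> Gm (m + n) (ad S X).
Proof.
move=> hS hX; apply: GmB; first exact: GmM.
by rewrite addnC; apply: GmM.
Qed.


Lemma GmShat S k m : (forall i, (i <= m)%N -> Gm i (S i)) ->
  Gm m.+1 (Shat_of P0 V S k m).
Proof.
move=> hS; apply: Gmsum => t /andP[_ /eqP hs].
have H : forall s : seq 'I_m.+1, Gm (\sum_(i <- s) (i : nat)).+1
    (foldr (fun (i : 'I_m.+1) X => ad (S i) X) (Vod P0 V) s).
  elim => [|i s IH] /=; first by rewrite big_nil; exact: GmVod.
  rewrite big_cons -addnS; apply: Gmad => //; apply: hS.
  by rewrite -ltnS; exact: ltn_ord.
by have := H t; rewrite hs.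
Qed.

Lemma GmSnext S n : (0 < n)%N -> (forall i, (i <= n.-1)%N -> Gm i (S i)) ->
  Gm n (Snext P0 G V S n).
Proof.
move=> hn hS; rewrite /Snext.
case: eqP => [->|h1]; first exact: GmLop GmVod.
case: eqP => [e2|h2]; first subst n.
  by apply: GmN; apply: GmLop; exact: (Gmad GmVd (hS 1%N isT)).
apply: GmD.
  apply: GmN; apply: GmLop.
  by have := Gmad GmVd (hS n.-1 (leqnn _)); rewrite add1n prednK.
apply: Gmsum => j _; apply: GmZ; apply: GmLop.
by have := GmShat (2 * j) hS; rewrite prednK.
Qed.

Lemma size_Sseq N : size (Sseq P0 G V N) = N.+1.
Proof. by elim: N => //= N IH; rewrite size_rcons IH. Qed.

Lemma GmSseq N i : (i <= N)%N -> Gm i (Sseq P0 G V N)`_i.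
Proof.
elim: N i => [|N IH] i hi.
  by move: hi; rewrite leqn0 => /eqP ->; exact: Gm0.
rewrite /= nth_rcons size_Sseq.
case: ltnP => h; first exact: IH.
have -> : i = N.+1 by apply/eqP; rewrite eqn_leq hi h.
rewrite eqxx; apply: GmSnext => // j hj; exact: IH.
Qed.

Lemma GmSgen i : Gm i (Sgen P0 G V i).
Proof. exact: GmSseq. Qed.

Definition offd X := P0 *m X *m P0 = 0 /\ Q0 *m X *m Q0 = 0.
Definition diag X := P0 *m X *m Q0 = 0 /\ Q0 *m X *m P0 = 0.

Lemma lPP (A : 'M_d) : A *m P0 *m P0 = A *m P0.
Proof. by rewrite -mulmxA hPP. Qed.
Lemma lQQ (A : 'M_d) : A *m Q0 *m Q0 = A *m Q0.
Proof. by rewrite -mulmxA hQQ. Qed.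
Lemma lPQ (A : 'M_d) : A *m P0 *m Q0 = 0.
Proof. by rewrite -mulmxA hPQ mulmx0. Qed.
Lemma lQP (A : 'M_d) : A *m Q0 *m P0 = 0.
Proof. by rewrite -mulmxA hQP mulmx0. Qed.
Lemma lPG (A : 'M_d) : A *m P0 *m G = 0.
Proof. by rewrite -mulmxA hPG mulmx0. Qed.
Lemma lGP (A : 'M_d) : A *m G *m P0 = 0.
Proof. by rewrite -mulmxA hGP mulmx0. Qed.

Ltac simp := rewrite ?hQ; rewrite ?(mulmxDl, mulmxDr, mulmxBl, mulmxBr, mulmxN, mulNmx, mulmxA, opprK); 
  rewrite ?(mulmxN, mulNmx, opprK, hPP, hPQ, hQP, hQQ, lPP, lPQ, lQP, lQQ, lPG, lGP, hPG, hGP,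
            mul0mx, mulmx0, add0r, addr0, subr0, sub0r, oppr0, subrr).

Lemma offd0 : offd 0.
Proof. by split; rewrite mulmx0 mul0mx. Qed.
Lemma offdD X Y : offd X -> offd Y -> offd (X + Y).
Proof. by move=> [a b] [c e]; split; rewrite mulmxDr mulmxDl ?a ?b ?c ?e addr0. Qed.
Lemma offdZ c X : offd X -> offd (c *: X).
Proof. by move=> [a b]; split; rewrite -scalemxAr -scalemxAl ?a ?b scaler0. Qed.
Lemma offdN X : offd X -> offd (- X).
Proof. by move=> h; rewrite -scaleN1r; apply: offdZ. Qed.
Lemma offdsum (I : Type) (r : seq I) (P : pred I) F :
  (forall i, P i -> offd (F i)) -> offd (\sum_(i <- r | P i) F i).
Proof. move=> h; apply: big_ind => //; [exact: offd0 | exact: offdD]. Qed.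

Lemma offdLop X : offd (Lop P0 G X).
Proof. by rewrite /Lop; split; simp. Qed.
Lemma offdVod : offd (Vod P0 V).
Proof. by rewrite /Vod; split; simp. Qed.

Lemma rsplit (X : 'M_d) : X = X *m P0 + X *m Q0.
Proof. by rewrite -mulmxDr -hQ /Qc addrC subrK mulmx1. Qed.
Lemma lsplit (X : 'M_d) : X = P0 *m X + Q0 *m X.
Proof. by rewrite -mulmxDl -hQ /Qc addrC subrK mul1mx. Qed.

Lemma offdE X : offd X -> X = P0 *m X *m Q0 + Q0 *m X *m P0.
Proof.
move=> [a b]; rewrite {1}(lsplit X) {1}(rsplit (P0 *m X)) {1}(rsplit (Q0 *m X)).
by rewrite a b add0r addr0.
Qed.
Lemma diagE X : diag X -> X = P0 *m X *m P0 + Q0 *m X *m Q0.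
Proof.
move=> [a b]; rewrite {1}(lsplit X) {1}(rsplit (P0 *m X)) {1}(rsplit (Q0 *m X)).
by rewrite a b add0r addr0.
Qed.

Lemma adOO S X : offd S -> offd X -> diag (ad S X).
Proof. by move=> hS hX; rewrite /diag /ad (offdE hS) (offdE hX); split; simp. Qed.
Lemma adOD S X : offd S -> diag X -> offd (ad S X).
Proof. by move=> hS hX; rewrite /offd /ad (offdE hS) (diagE hX); split; simp. Qed.

Lemma offdSnext S n : offd (Snext P0 G V S n).
Proof.
rewrite /Snext; case: ifP => _; first exact: offdLop.
case: ifP => _; first exact/offdN/offdLop.
apply: offdD; first exact/offdN/offdLop.
by apply: offdsum => j _; apply/offdZ/offdLop.
Qed.

Lemma offdSseq N i : offd (Sseq P0 G V N)`_i.
Proof.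
elim: N i => [|N IH] i.
  by case: i => [|[|i]] /=; exact: offd0.
rewrite /= nth_rcons; case: ifP => _; first exact: IH.
by case: ifP => _; [exact: offdSnext | exact: offd0].
Qed.


Definition CP X := exists c : C, X = c *: P0.
Lemma CP0 : CP 0. Proof. by exists 0; rewrite scale0r. Qed.
Lemma CPD X Y : CP X -> CP Y -> CP (X + Y).
Proof. by move=> [a ->] [b ->]; exists (a + b); rewrite scalerDl. Qed.
Lemma CPB X Y : CP X -> CP Y -> CP (X - Y).
Proof. by move=> [a ->] [b ->]; exists (a - b); rewrite scalerBl. Qed.

Lemma pairE A B Cm D : offd A -> offd B -> offd Cm -> offd D ->
  P0 *m A *m B *m Cm *m D *m P0 =
  (P0 *m (A *m B) *m P0) *m (P0 *m (Cm *m D) *m P0).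
Proof.
move=> hA hB hC hD.
by rewrite (offdE hA) (offdE hB) (offdE hC) (offdE hD); simp.
Qed.

Definition R X x := [/\ offd X, Gm x X & (0 < x)%N].

Lemma Key (L : nat) :
  (forall n : nat, (n < L)%N ->
     forall X, Gm n X -> exists c : C, P0 *m X *m P0 = c *: P0) ->
  forall A B Cm D a b c e, R A a -> R B b -> R Cm c -> R D e ->
  (a + b + c + e = L)%N -> CP (P0 *m A *m B *m Cm *m D *m P0).
Proof.
move=> H A B Cm D a b c e [oA gA pA] [oB gB pB] [oC gC pC] [oD gD pD] hs.
rewrite pairE //.
have [c1 ->] := H (a + b)%N ltac:(lia) _ (GmM gA gB).
have [c2 ->] := H (c + e)%N ltac:(lia) _ (GmM gC gD).
by exists (c1 * c2); rewrite -scalemxAl -scalemxAr hPP scalerA.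
Qed.

Lemma key4 (L : nat) :
  (forall n : nat, (n < L)%N ->
     forall X, Gm n X -> exists c : C, P0 *m X *m P0 = c *: P0) ->
  forall A B Cm D a b c e, R A a -> R B b -> R Cm c -> R D e ->
  (a + b + c + e = L)%N -> CP (P0 *m ad A (ad B (ad Cm D)) *m P0).
Proof.
move=> H A B Cm D a b c e rA rB rC rD hs.
rewrite /ad; rewrite ?(mulmxDl, mulmxDr, mulmxBl, mulmxBr, mulmxN, mulNmx, mulmxA).
repeat (apply: CPB || apply: CPD).
all: eapply Key; try eassumption; lia.
Qed.

Lemma Gmfoldr m (S : nat -> 'M_d) : (forall i, (i <= m)%N -> Gm i (S i)) ->
  forall s : seq 'I_m.+1, Gm (\sum_(i <- s) (i : nat)).+1
    (foldr (fun (i : 'I_m.+1) X => ad (S i) X) (Vod P0 V) s).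
Proof.
move=> hS; elim => [|i s IH] /=; first by rewrite big_nil; exact: GmVod.
rewrite big_cons -addnS; apply: Gmad => //; apply: hS.
by rewrite -ltnS; exact: ltn_ord.
Qed.

Lemma foldr_par m (S : nat -> 'M_d) : (forall i, offd (S i)) ->
  forall s : seq 'I_m.+1,
  if odd (size s) then diag (foldr (fun (i : 'I_m.+1) X => ad (S i) X) (Vod P0 V) s)
  else offd (foldr (fun (i : 'I_m.+1) X => ad (S i) X) (Vod P0 V) s).
Proof.
move=> hS; elim => [|i s IH] /=; first exact: offdVod.
by case: (odd (size s)) IH => /= IH; [apply: adOD | apply: adOO].
Qed.

Lemma Shat0 S k : (0 < k)%N -> Shat_of P0 V S k 0 = 0.
Proof.
move=> hk; apply: big1 => -[s hsz] /andP[hall _].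
case: s hsz hall => [|x s] /= hsz; first by move: hsz hk => /eqP <-.
by case: x => [[|i] hi] //=.
Qed.


Lemma part1 (L : nat) :
  (forall n : nat, (n < L)%N ->
     forall X, Gm n X -> exists c : C, P0 *m X *m P0 = c *: P0) ->
  forall j n, (1 <= j)%N -> (n < L)%N ->
  CP (P0 *m Shat P0 G V (2 * j).-1 n.-1 *m P0).
Proof.
move=> H j n hj hn; rewrite /Shat.
case: n hn => [|n] hn.
  by rewrite Shat0 ?mulmx0 ?mul0mx; [exact: CP0 | lia].
have := GmShat (2 * j).-1 (fun i _ => GmSgen i) (m := n) => /= hG.
by have [c ->] := H n.+1 hn _ hG; exists c.
Qed.

Lemma part2 (L : nat) :
  (forall n : nat, (n < L)%N ->
     forall X, Gm n X -> exists c : C, P0 *m X *m P0 = c *: P0) ->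
  forall j, (1 < j)%N -> CP (P0 *m Shat P0 G V (2 * j).-1 L.-1 *m P0).
Proof.
move=> H j hj; rewrite /Shat.
have hk : (3 <= (2 * j).-1)%N by lia.
case: L H => [|L] H.
  by rewrite Shat0 ?mulmx0 ?mul0mx; [exact: CP0 | lia].
rewrite /Shat_of mulmx_sumr mulmx_suml; apply: big_ind; [exact: CP0 | exact: CPD |].
move=> -[s hsz] /andP[hall /eqP hs] /=.
case: s hsz hall hs => [|i1 [|i2 [|i3 rest]]] hsz; have hsz2 := eqP hsz; try by rewrite -hsz2 in hk.
rewrite /= !big_cons => /and4P[p1 p2 p3 prest] hs.
have RS : forall i : 'I_L.+1, (0 < i)%N -> R (Sgen P0 G V i) i.
  by move=> i hi; split => //; [exact: offdSseq | exact: GmSgen].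
have hpar := foldr_par (m := L) (S := Sgen P0 G V) (fun i => offdSseq i i) rest.
have e : size rest = (2 * (j - 2))%N by move: hsz2 => /= hsz2; lia.
rewrite e oddM /= in hpar.
have gT := Gmfoldr (m := L) (S := Sgen P0 G V) (fun i _ => GmSgen i) rest.
have rT : R (foldr (fun i : 'I_L.+1 => [eta ad (Sgen P0 G V i)]) (Vod P0 V) rest)
           (\sum_(i <- rest) (i : nat)).+1 by split.
apply: (key4 H (RS i1 p1) (RS i2 p2) (RS i3 p3) rT).
by rewrite -[in RHS]hs !addnA addnS.
Qed.

End Aux.

Theorem lemma5 (C : numClosedFieldType) (d : nat) (H0 V P0 : 'M[C]_d)
    (E0 : C) (L : nat) :
  is_hermitian H0 -> ground_energy H0 E0 -> ground_proj H0 E0 P0 ->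
  is_hermitian V ->
  let G := resolvent H0 E0 P0 in
  (forall n : nat, (n < L)%N ->
     forall X, in_Gamma P0 G V n X -> exists c : C, P0 *m X *m P0 = c *: P0) ->
  (forall (j n : nat), (1 <= j)%N -> (n < L)%N ->
     exists c : C, P0 *m Shat P0 G V (2 * j).-1 n.-1 *m P0 = c *: P0) /\
  (forall j : nat, (1 < j)%N ->
     exists c : C, P0 *m Shat P0 G V (2 * j).-1 L.-1 *m P0 = c *: P0).
Proof.
move=> _ _ [hPP _ _] _ G H.
have hPQ : P0 *m Qc P0 = 0 by rewrite /Qc mulmxBr mulmx1 hPP subrr.
have hQP : Qc P0 *m P0 = 0 by rewrite /Qc mulmxBl mul1mx hPP subrr.
have hQQ : Qc P0 *m Qc P0 = Qc P0 by rewrite {1}/Qc mulmxBl mul1mx hPQ subr0.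
have hPG : P0 *m G = 0 by rewrite /G /resolvent !mulmxA hPQ !mul0mx.
have hGP : G *m P0 = 0 by rewrite /G /resolvent -!mulmxA hQP !mulmx0.
have hQG : Qc P0 *m G = G by rewrite /G /resolvent !mulmxA hQQ.
have hGQ : G *m Qc P0 = G by rewrite /G /resolvent -!mulmxA hQQ.
split.
  by move=> j n hj hn; apply: (part1 erefl hPP hPG hGP hQG hGQ H).
by move=> j hj; apply: (part2 erefl hPP hPG hGP hQG hGQ H).
Qed.
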